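(* Let $\mu>0$ and let $\psi:(0,\infty)\times\mathbb T\to\mathbb R$ be such that $\psi_\beta$ exists and is $C^1$ on $(0,\infty)\times\mathbb T$, there are constants $0<m\le M$ with $-M\beta^{-2\mu}\le\psi_\beta(\beta,\phi)\le-m\beta^{-2\mu}$ for all $(\beta,\phi)$, and $\psi_{\beta\varphi}:=(\partial_\phi-\partial_\beta)\psi_\beta<0$ everywhere. Define $A(\beta,\phi)=(a(\beta,\phi),\beta+\phi)\in\mathbb R\times\mathbb T$ with $a=\frac12\log(-\psi_\beta/\mu)$, and $B(a,\theta)=(e^a\cos\theta,e^a\sin\theta)$. Then $T=B\circ A$ is a $C^1$-diffeomorphism from $(0,\infty)\times\mathbb T$ onto $\mathbb R^2\setminus\{0\}$.
   Context: $\mathbb T=\mathbb R/2\pi\mathbb Z$. *)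

(* Defs.v *)
From Stdlib Require Import Reals.
From Coquelicot Require Import Coquelicot.
Open Scope R_scope.

Definition C1_on (U : R -> R -> Prop) (f : R -> R -> R) : Prop :=
  forall x y, U x y ->
    ex_derive (fun t => f t y) x /\
    ex_derive (fun t => f x t) y /\
    continuous (fun p : R * R => f (fst p) (snd p)) (x, y) /\
    continuous (fun p : R * R => Derive (fun t => f t (snd p)) (fst p)) (x, y) /\
    continuous (fun p : R * R => Derive (fun t => f (fst p) t) (snd p)) (x, y).

Definition dpsi (psi : R -> R -> R) (b p : R) : R :=
  Derive (fun t => psi t p) b.

Definition psi_bphi (psi : R -> R -> R) (b p : R) : R :=
  Derive (fun t => dpsi psi b t) p - Derive (fun t => dpsi psi t p) b.

Definition Amap (mu : R) (psi : R -> R -> R) (b p : R) : R * R :=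
  (1/2 * ln (- dpsi psi b p / mu), b + p).

Definition Bmap (q : R * R) : R * R :=
  (exp (fst q) * cos (snd q), exp (fst q) * sin (snd q)).

Definition Tmap (mu : R) (psi : R -> R -> R) (b p : R) : R * R :=
  Bmap (Amap mu psi b p).

(* Main.v *)
Require Import Defs.
From Stdlib Require Import Reals.
From Coquelicot Require Import Coquelicot.
From Stdlib Require Import Lra Lia ZArith ClassicalEpsilon.
Open Scope R_scope.

Lemma cont_loc {T U: UniformSpace} (f : T -> U) x P :
  continuous f x -> locally (f x) P -> locally x (fun y => P (f y)).
Proof. intros H HP. exact (H P HP). Qed.

Lemma c_plus {T : UniformSpace} (f g : T -> R) x :
  continuous f x -> continuous g x -> continuous (fun z => f z + g z) x.
Proof. intros; exact (continuous_plus f g x H H0). Qed.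
Lemma c_mult {T : UniformSpace} (f g : T -> R) x :
  continuous f x -> continuous g x -> continuous (fun z => f z * g z) x.
Proof. intros; exact (continuous_mult f g x H H0). Qed.
Lemma c_opp {T : UniformSpace} (f : T -> R) x :
  continuous f x -> continuous (fun z => - f z) x.
Proof. intros; exact (continuous_opp f x H). Qed.
Lemma c_minus {T : UniformSpace} (f g : T -> R) x :
  continuous f x -> continuous g x -> continuous (fun z => f z - g z) x.
Proof. intros; apply c_plus; auto; apply c_opp; auto. Qed.
Lemma c_inv {T : UniformSpace} (f : T -> R) x :
  continuous f x -> f x <> 0 -> continuous (fun z => / f z) x.
Proof. intros. apply (continuous_comp f (fun z => / z)); auto. apply continuous_Rinv; auto. Qed.
Lemma c_const {T : UniformSpace} (c : R) (x : T) : continuous (fun _ => c) x.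
Proof. apply continuous_const. Qed.
Lemma c_comp1 {T : UniformSpace} (phi : R -> R) (f : T -> R) x :
  continuous f x -> continuous phi (f x) -> continuous (fun z => phi (f z)) x.
Proof. intros; apply (continuous_comp f phi); auto. Qed.
Lemma c_fst (x y : R) : continuous (fun q : R * R => fst q) (x, y).
Proof. apply continuous_fst. Qed.
Lemma c_snd (x y : R) : continuous (fun q : R * R => snd q) (x, y).
Proof. apply continuous_snd. Qed.

Definition LC1 (F : R -> R -> R) (x y : R) : Prop :=
 locally (x,y) (fun q => ex_derive (fun t => F t (snd q)) (fst q) /\
                         ex_derive (fun t => F (fst q) t) (snd q)) /\
 continuous (fun q => F (fst q) (snd q)) (x,y) /\
 continuous (fun q => Derive (fun t => F t (snd q)) (fst q)) (x,y) /\
 continuous (fun q => Derive (fun t => F (fst q) t) (snd q)) (x,y).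

Lemma LC1_C1 F x y : LC1 F x y ->
    ex_derive (fun t => F t y) x /\
    ex_derive (fun t => F x t) y /\
    continuous (fun p : R * R => F (fst p) (snd p)) (x, y) /\
    continuous (fun p : R * R => Derive (fun t => F t (snd p)) (fst p)) (x, y) /\
    continuous (fun p : R * R => Derive (fun t => F (fst p) t) (snd p)) (x, y).
Proof.
  intros [H1 [H2 [H3 H4]]]. apply locally_singleton in H1. simpl in H1. tauto.
Qed.

Lemma LC1_const c x y : LC1 (fun _ _ => c) x y.
Proof.
  split; [|split;[|split]].
  - apply filter_forall. intros. split; apply ex_derive_const.
  - apply c_const.
  - apply continuous_ext_loc with (fun _ => 0). apply filter_forall. intros. rewrite Derive_const; auto. apply c_const.
  - apply continuous_ext_loc with (fun _ => 0). apply filter_forall. intros. rewrite Derive_const; auto. apply c_const.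
Qed.

Lemma LC1_x x y : LC1 (fun a _ => a) x y.
Proof.
  split; [|split;[|split]].
  - apply filter_forall. intros. split. apply ex_derive_id. apply ex_derive_const.
  - apply c_fst.
  - apply continuous_ext_loc with (fun _ => 1). apply filter_forall. intros. rewrite Derive_id; auto. apply c_const.
  - apply continuous_ext_loc with (fun _ => 0). apply filter_forall. intros. rewrite Derive_const; auto. apply c_const.
Qed.

Lemma LC1_y x y : LC1 (fun _ b => b) x y.
Proof.
  split; [|split;[|split]].
  - apply filter_forall. intros. split. apply ex_derive_const. apply ex_derive_id.
  - apply c_snd.
  - apply continuous_ext_loc with (fun _ => 0). apply filter_forall. intros. rewrite Derive_const; auto. apply c_const.
  - apply continuous_ext_loc with (fun _ => 1). apply filter_forall. intros. rewrite Derive_id; auto. apply c_const.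
Qed.

Lemma LC1_plus F G x y : LC1 F x y -> LC1 G x y -> LC1 (fun a b => F a b + G a b) x y.
Proof.
  intros [F1 [F2 [F3 F4]]] [G1 [G2 [G3 G4]]].
  split; [|split;[|split]].
  - generalize (filter_and _ _ F1 G1). apply filter_imp. intros q [[A1 A2] [B1 B2]].
    split; [apply (ex_derive_plus (fun t => F t (snd q)) (fun t => G t (snd q))) | apply (ex_derive_plus (fun t => F (fst q) t) (fun t => G (fst q) t))]; auto.
  - apply c_plus; auto.
  - apply continuous_ext_loc with (fun q => Derive (fun t => F t (snd q)) (fst q) + Derive (fun t => G t (snd q)) (fst q)).
    generalize (filter_and _ _ F1 G1). apply filter_imp. intros q [[A1 A2] [B1 B2]].
    rewrite Derive_plus; auto. apply c_plus; auto.
  - apply continuous_ext_loc with (fun q => Derive (fun t => F (fst q) t) (snd q) + Derive (fun t => G (fst q) t) (snd q)).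
    generalize (filter_and _ _ F1 G1). apply filter_imp. intros q [[A1 A2] [B1 B2]].
    rewrite Derive_plus; auto. apply c_plus; auto.
Qed.

Lemma LC1_mult F G x y : LC1 F x y -> LC1 G x y -> LC1 (fun a b => F a b * G a b) x y.
Proof.
  intros [F1 [F2 [F3 F4]]] [G1 [G2 [G3 G4]]].
  split; [|split;[|split]].
  - generalize (filter_and _ _ F1 G1). apply filter_imp. intros q [[A1 A2] [B1 B2]].
    split; [apply (ex_derive_mult (fun t => F t (snd q)) (fun t => G t (snd q))) | apply (ex_derive_mult (fun t => F (fst q) t) (fun t => G (fst q) t))]; auto.
  - apply c_mult; auto.
  - apply continuous_ext_loc with (fun q => Derive (fun t => F t (snd q)) (fst q) * G (fst q) (snd q) + F (fst q) (snd q) * Derive (fun t => G t (snd q)) (fst q)).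
    generalize (filter_and _ _ F1 G1). apply filter_imp. intros q [[A1 A2] [B1 B2]].
    rewrite Derive_mult; auto. apply c_plus; apply c_mult; auto.
  - apply continuous_ext_loc with (fun q => Derive (fun t => F (fst q) t) (snd q) * G (fst q) (snd q) + F (fst q) (snd q) * Derive (fun t => G (fst q) t) (snd q)).
    generalize (filter_and _ _ F1 G1). apply filter_imp. intros q [[A1 A2] [B1 B2]].
    rewrite Derive_mult; auto. apply c_plus; apply c_mult; auto.
Qed.

Lemma LC1_comp1 (phi phi' : R -> R) F x y :
  LC1 F x y -> locally (F x y) (fun z => is_derive phi z (phi' z)) ->
  continuous phi' (F x y) -> LC1 (fun a b => phi (F a b)) x y.
Proof.
  intros [F1 [F2 [F3 F4]]] Hl Hc.
  pose proof (cont_loc _ _ _ F2 Hl) as Hl2. simpl in Hl2.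
  split; [|split;[|split]].
  - generalize (filter_and _ _ F1 Hl2). apply filter_imp. intros q [[A1 A2] B].
    split.
    + destruct A1 as [l Hl']. exists (scal l (phi' (F (fst q) (snd q)))).
      apply (is_derive_comp phi (fun t => F t (snd q))); auto.
    + destruct A2 as [l Hl']. exists (scal l (phi' (F (fst q) (snd q)))).
      apply (is_derive_comp phi (fun t => F (fst q) t)); auto.
  - apply c_comp1; auto. apply locally_singleton in Hl.
    simpl. apply (ex_derive_continuous phi). eexists; eauto.
  - apply continuous_ext_loc with (fun q => Derive (fun t => F t (snd q)) (fst q) * phi' (F (fst q) (snd q))).
    generalize (filter_and _ _ F1 Hl2). apply filter_imp. intros q [[A1 A2] B].
    symmetry. apply is_derive_unique. apply (is_derive_comp phi (fun t => F t (snd q))); auto.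
    apply Derive_correct; auto.
    apply c_mult; auto. apply c_comp1; auto.
  - apply continuous_ext_loc with (fun q => Derive (fun t => F (fst q) t) (snd q) * phi' (F (fst q) (snd q))).
    generalize (filter_and _ _ F1 Hl2). apply filter_imp. intros q [[A1 A2] B].
    symmetry. apply is_derive_unique. apply (is_derive_comp phi (fun t => F (fst q) t)); auto.
    apply Derive_correct; auto.
    apply c_mult; auto. apply c_comp1; auto.
Qed.

Lemma loc_pos {T : UniformSpace} (g : T -> R) x :
  continuous g x -> 0 < g x -> locally x (fun z => 0 < g z).
Proof. intros Hc Hp. apply (cont_loc g x (fun u => 0 < u)); auto. apply open_gt; auto. Qed.

Lemma cont_of_der (phi phi' : R -> R) z : is_derive phi z (phi' z) -> continuous phi z.
Proof. intros H. apply (ex_derive_continuous phi). eexists; eauto. Qed.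

Lemma loc_neq0 (z0 : R) : z0 <> 0 -> locally z0 (fun z => z <> 0).
Proof.
  intros H. assert (Hc : continuous (fun z : R => z * z) z0).
  { apply c_mult; apply continuous_id. }
  assert (Hp : 0 < z0 * z0) by (apply Rsqr_pos_lt; auto).
  generalize (loc_pos _ _ Hc Hp). apply filter_imp. intros z Hz ->. lra.
Qed.

Lemma LC1_opp F x y : LC1 F x y -> LC1 (fun a b => - F a b) x y.
Proof.
  intros H. apply (LC1_comp1 Ropp (fun _ => -1)); auto.
  apply filter_forall. intros z. auto_derive; auto; ring. apply c_const.
Qed.
Lemma LC1_exp F x y : LC1 F x y -> LC1 (fun a b => exp (F a b)) x y.
Proof.
  intros H. apply (LC1_comp1 exp exp); auto.
  apply filter_forall. intros z. apply is_derive_exp. apply continuous_exp.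
Qed.
Lemma LC1_cos F x y : LC1 F x y -> LC1 (fun a b => cos (F a b)) x y.
Proof.
  intros H. apply (LC1_comp1 cos (fun z => - sin z)); auto.
  apply filter_forall. intros z. apply is_derive_cos.
  apply c_opp. apply (cont_of_der sin cos). apply is_derive_sin.
Qed.
Lemma LC1_sin F x y : LC1 F x y -> LC1 (fun a b => sin (F a b)) x y.
Proof.
  intros H. apply (LC1_comp1 sin cos); auto.
  apply filter_forall. intros z. apply is_derive_sin.
  apply (cont_of_der cos (fun z => - sin z)). apply is_derive_cos.
Qed.
Lemma LC1_atan F x y : LC1 F x y -> LC1 (fun a b => atan (F a b)) x y.
Proof.
  intros H. apply (LC1_comp1 atan (fun z => / (1 + z²))); auto.
  apply filter_forall. intros z. apply is_derive_atan.
  apply c_inv. apply c_plus. apply c_const. unfold Rsqr. apply c_mult; apply continuous_id.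
  apply Rgt_not_eq. apply Rlt_gt. apply Rplus_lt_le_0_compat. lra. apply Rle_0_sqr.
Qed.
Lemma LC1_ln F x y : LC1 F x y -> 0 < F x y -> LC1 (fun a b => ln (F a b)) x y.
Proof.
  intros H Hp. apply (LC1_comp1 ln Rinv); auto.
  generalize (open_gt 0 (F x y) Hp). apply filter_imp. intros z Hz. apply is_derive_ln; auto.
  apply continuous_Rinv. lra.
Qed.
Lemma LC1_inv F x y : LC1 F x y -> F x y <> 0 -> LC1 (fun a b => / (F a b)) x y.
Proof.
  intros H Hp. apply (LC1_comp1 Rinv (fun z => - / (z * z))); auto.
  generalize (loc_neq0 _ Hp). apply filter_imp. intros z Hz. auto_derive; auto. field; auto.
  apply c_opp. apply c_inv. apply c_mult; apply continuous_id. intros Hz. apply Hp. nra.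
Qed.
Lemma LC1_sqrt F x y : LC1 F x y -> 0 < F x y -> LC1 (fun a b => sqrt (F a b)) x y.
Proof.
  intros H Hp. apply (LC1_comp1 sqrt (fun z => / (2 * sqrt z))); auto.
  generalize (open_gt 0 (F x y) Hp). apply filter_imp. intros z Hz. auto_derive; auto. field.
  apply Rgt_not_eq. apply sqrt_lt_R0; auto.
  apply c_inv. apply c_mult. apply c_const. apply (cont_of_der sqrt (fun z => / (2 * sqrt z))).
  auto_derive; auto. field. apply Rgt_not_eq. apply sqrt_lt_R0; auto.
  assert (0 < sqrt (F x y)) by (apply sqrt_lt_R0; auto). lra.
Qed.

Definition th (al x y : R) := al + atan ((y * cos al - x * sin al) * / (x * cos al + y * sin al)).

Lemma th_cos al x y : 0 < x * cos al + y * sin al ->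
  x = sqrt (x^2 + y^2) * cos (th al x y) /\ y = sqrt (x^2 + y^2) * sin (th al x y).
Proof.
  intros Hu. unfold th.
  set (c := cos al). set (s := sin al).
  set (u := x * c + y * s). set (v := y * c - x * s).
  set (t := v * / u).
  assert (Hcs : c * c + s * s = 1) by (unfold c, s; pose proof (sin2_cos2 al); unfold Rsqr in H; lra).
  assert (HS : 0 < sqrt (1 + t²)) by (apply sqrt_lt_R0; pose proof (Rle_0_sqr t); lra).
  assert (HSS : sqrt (1 + t²) * sqrt (1 + t²) = 1 + t²) by (apply sqrt_sqrt; pose proof (Rle_0_sqr t); lra).
  assert (Hr0 : 0 <= x^2 + y^2) by (pose proof (pow2_ge_0 x); pose proof (pow2_ge_0 y); lra).
  assert (Hrr : sqrt (x^2+y^2) * sqrt (x^2+y^2) = x^2+y^2) by (apply sqrt_sqrt; auto).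
  assert (Htu : t * u = v) by (unfold t; field; apply Rgt_not_eq; exact Hu).
  assert (Hr : sqrt (x^2 + y^2) = sqrt (1 + t²) * u).
  { assert (Hsq : (sqrt (1 + t²) * u) * (sqrt (1 + t²) * u) = x^2 + y^2).
    { replace ((sqrt (1 + t²) * u) * (sqrt (1 + t²) * u)) with ((sqrt (1 + t²) * sqrt (1 + t²)) * (u * u)) by ring.
      rewrite HSS. unfold Rsqr.
      replace ((1 + t * t) * (u * u)) with (u * u + (t * u) * (t * u)) by ring.
      rewrite Htu. unfold u, v.
      replace ((x * c + y * s) * (x * c + y * s) + (y * c - x * s) * (y * c - x * s)) with ((x^2 + y^2) * (c * c + s * s)) by ring.
      rewrite Hcs. ring. }
    assert (0 <= sqrt (x^2+y^2)) by apply sqrt_pos.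
    assert (0 < sqrt (1 + t²) * u) by (apply Rmult_lt_0_compat; auto).
    apply Rsqr_inj; try lra. unfold Rsqr. rewrite Hrr. symmetry. exact Hsq. }
  rewrite cos_plus, sin_plus, cos_atan, sin_atan, Hr. fold c s.
  split.
  - replace (sqrt (1 + t²) * u * (c * (1 / sqrt (1 + t²)) - s * (t / sqrt (1 + t²)))) with (u * c - s * (t * u)) by (field; lra).
    rewrite Htu. unfold u, v.
    replace ((x * c + y * s) * c - s * (y * c - x * s)) with (x * (c * c + s * s)) by ring. rewrite Hcs; ring.
  - replace (sqrt (1 + t²) * u * (s * (1 / sqrt (1 + t²)) + c * (t / sqrt (1 + t²)))) with (u * s + c * (t * u)) by (field; lra).
    rewrite Htu. unfold u, v.
    replace ((x * c + y * s) * s + c * (y * c - x * s)) with (y * (c * c + s * s)) by ring. rewrite Hcs; ring.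
Qed.


Lemma LC1_th al x y : 0 < x * cos al + y * sin al -> LC1 (th al) x y.
Proof.
  intros Hu. change (LC1 (fun x y => al + atan ((y * cos al + - (x * sin al)) * / (x * cos al + y * sin al))) x y).
  apply (LC1_plus (fun _ _ => al)). apply LC1_const.
  apply (LC1_atan (fun x y => ((y * cos al + - (x * sin al)) * / (x * cos al + y * sin al)))).
  apply (LC1_mult (fun x y => (y * cos al + - (x * sin al))) (fun x y => / (x * cos al + y * sin al))).
  - apply (LC1_plus (fun x y => y * cos al) (fun x y => - (x * sin al))).
    + apply (LC1_mult (fun x y => y) (fun _ _ => cos al)). apply LC1_y. apply LC1_const.
    + apply (LC1_opp (fun x y => x * sin al)).
      apply (LC1_mult (fun x y => x) (fun _ _ => sin al)). apply LC1_x. apply LC1_const.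
  - apply (LC1_inv (fun x y => x * cos al + y * sin al)); [|lra].
    apply (LC1_plus (fun x y => x * cos al) (fun x y => y * sin al)).
    + apply (LC1_mult (fun x y => x) (fun _ _ => cos al)). apply LC1_x. apply LC1_const.
    + apply (LC1_mult (fun x y => y) (fun _ _ => sin al)). apply LC1_y. apply LC1_const.
Qed.

Lemma ex_al x y : (x, y) <> (0, 0) -> exists al, 0 < x * cos al + y * sin al.
Proof.
  intros H. destruct (Rtotal_order x 0) as [Hx|[Hx|Hx]].
  - exists PI. rewrite cos_PI, sin_PI. lra.
  - subst. destruct (Rtotal_order y 0) as [Hy|[Hy|Hy]].
    + exists (- (PI/2)). rewrite cos_neg, sin_neg, cos_PI2, sin_PI2. lra.
    + subst. congruence.
    + exists (PI/2). rewrite cos_PI2, sin_PI2. lra.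
  - exists 0. rewrite cos_0, sin_0. lra.
Qed.

Lemma cont_eps (g : R -> R) x : continuous g x ->
  forall e, 0 < e -> exists d, 0 < d /\ forall y, Rabs (y - x) < d -> Rabs (g y - g x) < e.
Proof.
  intros Hc e He. apply continuity_pt_filterlim in Hc.
  destruct (Hc e He) as [d [Hd H]]. exists d. split; auto.
  intros y Hy. destruct (Req_dec y x) as [->|Hne].
  - rewrite Rminus_diag, Rabs_R0. auto.
  - apply (H y). split. split. exact I. auto. exact Hy.
Qed.

Lemma cont2_eps (g : R -> R -> R) x y : continuous (fun z : R * R => g (fst z) (snd z)) (x, y) ->
  forall e, 0 < e -> exists d, 0 < d /\ forall u v, Rabs (u - x) < d -> Rabs (v - y) < d -> Rabs (g u v - g x y) < e.
Proof.
  intros Hc e He. apply continuity_2d_pt_filterlim in Hc.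
  destruct (Hc (mkposreal e He)) as [d H]. exists d. split. apply cond_pos. intros; apply H; auto.
Qed.

Lemma divcont ks kb eps : kb <> 0 -> 0 < eps -> exists e, 0 < e /\
  forall u w, Rabs (u - ks) < e -> Rabs (w - kb) < e -> w <> 0 /\ Rabs (- u / w - - ks / kb) < eps.
Proof.
  intros Hkb He.
  assert (Hc : continuous (fun z : R * R => (fun u w => - u / w) (fst z) (snd z)) (ks, kb)).
  { apply c_mult. apply c_opp. apply c_fst. apply c_inv. apply c_snd. simpl; auto. }
  destruct (cont2_eps _ _ _ Hc eps He) as [d [Hd H]].
  assert (Hk : 0 < Rabs kb) by (apply Rabs_pos_lt; auto).
  exists (Rmin d (Rabs kb / 2)). split. apply Rmin_pos; lra.
  intros u w Hu Hw. pose proof (Rmin_l d (Rabs kb / 2)). pose proof (Rmin_r d (Rabs kb / 2)).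
  split.
  - intros ->. rewrite Rminus_0_l, Rabs_Ropp in Hw. lra.
  - apply H; lra.
Qed.

Lemma between_abs a b c : Rmin a b <= c <= Rmax a b -> Rabs (c - a) <= Rabs (b - a).
Proof. unfold Rmin, Rmax. destruct (Rle_dec a b); intros; unfold Rabs; repeat destruct Rcase_abs; lra. Qed.

Lemma deriv1d (K Kb Ks : R -> R -> R) (be : R -> R) s0 d0 :
 0 < d0 ->
 (forall s, Rabs (s - s0) < d0 -> K (be s) s = 0) ->
 continuous be s0 ->
 (forall b s, Rabs (b - be s0) < d0 -> Rabs (s - s0) < d0 -> is_derive (fun b => K b s) b (Kb b s)) ->
 (forall s, Rabs (s - s0) < d0 -> is_derive (K (be s0)) s (Ks (be s0) s)) ->
 continuous (fun z : R * R => Kb (fst z) (snd z)) (be s0, s0) ->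
 continuous (Ks (be s0)) s0 ->
 Kb (be s0) s0 <> 0 ->
 is_derive be s0 (- Ks (be s0) s0 / Kb (be s0) s0).
Proof.
  intros Hd0 HK Hbe HKb HKs cKb cKs Hnz.
  apply is_derive_Reals. intros eps Heps.
  set (b0 := be s0) in *.
  destruct (divcont (Ks b0 s0) (Kb b0 s0) eps Hnz Heps) as [e [He Hdiv]].
  destruct (cont2_eps _ _ _ cKb e He) as [d1 [Hd1 H1]].
  destruct (cont_eps _ _ cKs e He) as [d2 [Hd2 H2]].
  destruct (cont_eps _ _ Hbe (Rmin d0 d1) ltac:(apply Rmin_pos; lra)) as [d3 [Hd3 H3]].
  set (dl := Rmin d0 (Rmin d1 (Rmin d2 d3))).
  assert (Hdl : 0 < dl) by (unfold dl; repeat apply Rmin_pos; lra).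
  exists (mkposreal dl Hdl). intros h Hh0 Hh. simpl in Hh.
  assert (Hm1 : dl <= d0) by apply Rmin_l.
  assert (Hm2 : dl <= d1) by (unfold dl; eapply Rle_trans; [apply Rmin_r|apply Rmin_l]).
  assert (Hm3 : dl <= d2) by (unfold dl; eapply Rle_trans; [apply Rmin_r|]; eapply Rle_trans; [apply Rmin_r|apply Rmin_l]).
  assert (Hm4 : dl <= d3) by (unfold dl; eapply Rle_trans; [apply Rmin_r|]; eapply Rle_trans; [apply Rmin_r|apply Rmin_r]).
  set (s := s0 + h).
  assert (Hs : Rabs (s - s0) < dl) by (unfold s; replace (s0 + h - s0) with h by ring; auto).
  assert (Hbs : Rabs (be s - b0) < Rmin d0 d1) by (apply H3; lra).
  pose proof (Rmin_l d0 d1). pose proof (Rmin_r d0 d1).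
  destruct (MVT_gen (fun b => K b s) b0 (be s) (fun b => Kb b s)) as [xi [Hxi E1]].
  { intros x Hx. apply HKb; try lra. pose proof (between_abs b0 (be s) x ltac:(lra)). lra. }
  { intros x Hx. apply continuity_pt_filterlim. apply (ex_derive_continuous (fun b => K b s)).
    eexists. apply HKb; try lra. pose proof (between_abs b0 (be s) x Hx). lra. }
  destruct (MVT_gen (K b0) s0 s (Ks b0)) as [eta [Heta E2]].
  { intros x Hx. apply HKs. pose proof (between_abs s0 s x ltac:(lra)). lra. }
  { intros x Hx. apply continuity_pt_filterlim. apply (ex_derive_continuous (K b0)).
    eexists. apply HKs. pose proof (between_abs s0 s x Hx). lra. }
  pose proof (between_abs b0 (be s) xi Hxi) as Bxi.
  pose proof (between_abs s0 s eta Heta) as Beta.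
  rewrite (HK s) in E1 by lra. assert (HK0 : K b0 s0 = 0) by (apply HK; rewrite Rminus_diag, Rabs_R0; lra).
  rewrite HK0 in E2.
  assert (A1 : Rabs (Kb xi s - Kb b0 s0) < e) by (apply H1; lra).
  assert (A2 : Rabs (Ks b0 eta - Ks b0 s0) < e) by (apply H2; lra).
  destruct (Hdiv _ _ A2 A1) as [Hw Hb].
  replace (s - s0) with h in E2 by (unfold s; ring).
  replace ((be s - b0) / h) with (- Ks b0 eta / Kb xi s); auto.
  field_simplify_eq; auto. lra.
Qed.

Lemma ball_R (x y e : R) : Rabs (y - x) < e -> ball x e y.
Proof. intros H. unfold ball; simpl. unfold AbsRing_ball, abs, minus, plus, opp; simpl. exact H. Qed.
Lemma ball_R' (x y e : R) : ball x e y -> Rabs (y - x) < e.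
Proof. intros H. unfold ball in H; simpl in H. unfold AbsRing_ball, abs, minus, plus, opp in H; simpl in H. exact H. Qed.

Lemma loc_sec_x (P : R * R -> Prop) x y : locally (x, y) P ->
  exists d, 0 < d /\ forall s, Rabs (s - x) < d -> P (s, y).
Proof.
  intros [e He]. exists e. split. apply cond_pos. intros s Hs. apply He.
  split; simpl. apply ball_R; auto. apply ball_center.
Qed.
Lemma loc_sec_y (P : R * R -> Prop) x y : locally (x, y) P ->
  exists d, 0 < d /\ forall s, Rabs (s - y) < d -> P (x, s).
Proof.
  intros [e He]. exists e. split. apply cond_pos. intros s Hs. apply He.
  split; simpl. apply ball_center. apply ball_R; auto.
Qed.

Lemma cont_sec_x (G : R -> R -> R) x y : continuous (fun q : R * R => G (fst q) (snd q)) (x, y) ->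
  continuous (fun s => G s y) x.
Proof. intros H. apply (continuous_comp_2 (fun s : R => s) (fun _ => y) G). apply continuous_id. apply continuous_const. exact H. Qed.
Lemma cont_sec_y (G : R -> R -> R) x y : continuous (fun q : R * R => G (fst q) (snd q)) (x, y) ->
  continuous (fun s => G x s) y.
Proof. intros H. apply (continuous_comp_2 (fun _ => x) (fun s : R => s) G). apply continuous_const. apply continuous_id. exact H. Qed.


Definition D1 psi b p := Derive (fun t => dpsi psi t p) b.
Definition D2 psi b p := Derive (fun t => dpsi psi b t) p.

Definition bspec mu psi x y b := 0 < b /\ exists q, x = sqrt (x^2+y^2) * cos q /\
   y = sqrt (x^2+y^2) * sin q /\ dpsi psi b (q - b) = - mu * (x^2+y^2).
Definition bi mu psi x y := epsilon (inhabits 0) (bspec mu psi x y).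

Lemma r2pos x y : (x, y) <> (0, 0) -> 0 < x^2 + y^2.
Proof.
  intros H. destruct (Rle_lt_dec (x^2+y^2) 0) as [H'|H']; auto.
  exfalso. apply H. assert (x = 0) by nra. assert (y = 0) by nra. subst; auto.
Qed.

Definition ci mu psi x y := (x * cos (bi mu psi x y) + y * sin (bi mu psi x y)) / sqrt (x^2 + y^2).
Definition si mu psi x y := (y * cos (bi mu psi x y) - x * sin (bi mu psi x y)) / sqrt (x^2 + y^2).

Lemma LC1_r2 x y : LC1 (fun x y => x^2 + y^2) x y.
Proof.
  change (LC1 (fun x y => x * (x * 1) + y * (y * 1)) x y).
  apply (LC1_plus (fun x y => x * (x * 1)) (fun x y => y * (y * 1))).
  - apply (LC1_mult (fun x y => x) (fun x y => x * 1)). apply LC1_x.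
    apply (LC1_mult (fun x y => x) (fun _ _ => 1)). apply LC1_x. apply LC1_const.
  - apply (LC1_mult (fun x y => y) (fun x y => y * 1)). apply LC1_y.
    apply (LC1_mult (fun x y => y) (fun _ _ => 1)). apply LC1_y. apply LC1_const.
Qed.

Lemma exp_half z : 0 < z -> exp (1/2 * ln z) = sqrt z.
Proof.
  intros Hz. apply Rsqr_inj. left; apply exp_pos. apply sqrt_pos.
  unfold Rsqr. rewrite sqrt_sqrt by lra. rewrite <- exp_plus.
  replace (1 / 2 * ln z + 1 / 2 * ln z) with (ln z) by field. apply exp_ln; auto.
Qed.

Section S.
Variables (mu : R) (psi : R -> R -> R) (m M : R).
Hypothesis Hmu : 0 < mu.
Hypothesis Hper : forall b p, 0 < b -> psi b (p + 2 * PI) = psi b p.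
Hypothesis HC1 : C1_on (fun b _ => 0 < b) (dpsi psi).
Hypothesis Hm : 0 < m.
Hypothesis HmM : m <= M.
Hypothesis Hbd : forall b p, 0 < b ->
     - M * Rpower b (- (2 * mu)) <= dpsi psi b p <= - m * Rpower b (- (2 * mu)).
Hypothesis Hneg : forall b p, 0 < b -> psi_bphi psi b p < 0.

Notation f := (dpsi psi).

Lemma hd1 b p : 0 < b -> is_derive (fun t => f t p) b (D1 psi b p).
Proof. intros Hb. apply Derive_correct. apply (HC1 b p Hb). Qed.
Lemma hd2 b p : 0 < b -> is_derive (fun t => f b t) p (D2 psi b p).
Proof. intros Hb. apply Derive_correct. apply (HC1 b p Hb). Qed.
Lemma hcf b p : 0 < b -> continuous (fun q => f (fst q) (snd q)) (b,p).
Proof. intros Hb. apply (HC1 b p Hb). Qed.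
Lemma hcD1 b p : 0 < b -> continuous (fun q => D1 psi (fst q) (snd q)) (b,p).
Proof. intros Hb. apply (HC1 b p Hb). Qed.
Lemma hcD2 b p : 0 < b -> continuous (fun q => D2 psi (fst q) (snd q)) (b,p).
Proof. intros Hb. apply (HC1 b p Hb). Qed.

Lemma hdiff b p : 0 < b -> differentiable_pt_lim f b p (D1 psi b p) (D2 psi b p).
Proof.
  intros Hb. apply filterdiff_differentiable_pt_lim.
  eapply filterdiff_ext_lin.
  apply (is_derive_filterdiff f b p (D1 psi)).
  - assert (H := loc_pos (fun q : R*R => fst q) (b,p) (c_fst b p) Hb).
    apply (filter_imp _ _ (fun q Hq => hd1 (fst q) (snd q) Hq) H).
  - apply hd2; auto.
  - apply hcD1; auto.
  - intros u. simpl. reflexivity.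
Qed.

Lemma hchain (u v : R -> R) t du dv : 0 < u t -> is_derive u t du -> is_derive v t dv ->
  is_derive (fun s => f (u s) (v s)) t (D1 psi (u t) (v t) * du + D2 psi (u t) (v t) * dv).
Proof.
  intros Hp Hu Hv. apply is_derive_Reals. apply derivable_pt_lim_comp_2d.
  apply hdiff; auto. apply is_derive_Reals; auto. apply is_derive_Reals; auto.
Qed.

Lemma cf_comp {T : UniformSpace} (u v : T -> R) z : continuous u z -> continuous v z -> 0 < u z ->
  continuous (fun w => f (u w) (v w)) z.
Proof. intros. apply (continuous_comp_2 u v f); auto. apply hcf; auto. Qed.
Lemma cD1_comp {T : UniformSpace} (u v : T -> R) z : continuous u z -> continuous v z -> 0 < u z ->
  continuous (fun w => D1 psi (u w) (v w)) z.
Proof. intros. apply (continuous_comp_2 u v (D1 psi)); auto. apply hcD1; auto. Qed.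
Lemma cD2_comp {T : UniformSpace} (u v : T -> R) z : continuous u z -> continuous v z -> 0 < u z ->
  continuous (fun w => D2 psi (u w) (v w)) z.
Proof. intros. apply (continuous_comp_2 u v (D2 psi)); auto. apply hcD2; auto. Qed.


Lemma LC1_f U V x y : LC1 U x y -> LC1 V x y -> 0 < U x y ->
  LC1 (fun a b => f (U a b) (V a b)) x y.
Proof.
  intros [U1 [U2 [U3 U4]]] [V1 [V2 [V3 V4]]] Hp.
  pose proof (loc_pos _ _ U2 Hp) as Hl. simpl in Hl.
  pose proof (filter_and _ _ (filter_and _ _ U1 V1) Hl) as Hall.
  split; [|split;[|split]].
  - revert Hall. apply filter_imp. intros q [[[A1 A2] [B1 B2]] C].
    split; eexists.
    + apply (hchain (fun t => U t (snd q)) (fun t => V t (snd q))); auto; apply Derive_correct; auto.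
    + apply (hchain (fun t => U (fst q) t) (fun t => V (fst q) t)); auto; apply Derive_correct; auto.
  - apply (cf_comp (fun q => U (fst q) (snd q)) (fun q => V (fst q) (snd q))); auto.
  - apply continuous_ext_loc with (fun q => D1 psi (U (fst q) (snd q)) (V (fst q) (snd q)) * Derive (fun t => U t (snd q)) (fst q) + D2 psi (U (fst q) (snd q)) (V (fst q) (snd q)) * Derive (fun t => V t (snd q)) (fst q)).
    + revert Hall. apply filter_imp. intros q [[[A1 A2] [B1 B2]] C].
      symmetry. apply is_derive_unique.
      apply (hchain (fun t => U t (snd q)) (fun t => V t (snd q))); auto; apply Derive_correct; auto.
    + apply c_plus; apply c_mult; auto.
      apply (cD1_comp (fun q => U (fst q) (snd q)) (fun q => V (fst q) (snd q))); auto.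
      apply (cD2_comp (fun q => U (fst q) (snd q)) (fun q => V (fst q) (snd q))); auto.
  - apply continuous_ext_loc with (fun q => D1 psi (U (fst q) (snd q)) (V (fst q) (snd q)) * Derive (fun t => U (fst q) t) (snd q) + D2 psi (U (fst q) (snd q)) (V (fst q) (snd q)) * Derive (fun t => V (fst q) t) (snd q)).
    + revert Hall. apply filter_imp. intros q [[[A1 A2] [B1 B2]] C].
      symmetry. apply is_derive_unique.
      apply (hchain (fun t => U (fst q) t) (fun t => V (fst q) t)); auto; apply Derive_correct; auto.
    + apply c_plus; apply c_mult; auto.
      apply (cD1_comp (fun q => U (fst q) (snd q)) (fun q => V (fst q) (snd q))); auto.
      apply (cD2_comp (fun q => U (fst q) (snd q)) (fun q => V (fst q) (snd q))); auto.
Qed.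


Lemma f_neg b p : 0 < b -> f b p < 0.
Proof.
  intros Hb. destruct (Hbd b p Hb) as [_ H].
  assert (0 < Rpower b (- (2 * mu))) by (unfold Rpower; apply exp_pos). nra.
Qed.

Lemma LC1_T1 b p : 0 < b -> LC1 (fun b p => fst (Tmap mu psi b p)) b p.
Proof.
  intros Hb.
  change (LC1 (fun b p => exp (1/2 * ln (- f b p * / mu)) * cos (b + p)) b p).
  assert (Hf := f_neg b p Hb).
  assert (Hpos : 0 < - f b p * / mu) by (apply Rmult_lt_0_compat; [lra | apply Rinv_0_lt_compat; lra]).
  apply LC1_mult. apply LC1_exp. apply LC1_mult. apply LC1_const.
  apply LC1_ln; auto. apply LC1_mult. apply LC1_opp.
  apply (LC1_f (fun a _ => a) (fun _ b => b)); auto. apply LC1_x. apply LC1_y.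
  apply LC1_const. apply LC1_cos. apply LC1_plus. apply LC1_x. apply LC1_y.
Qed.

Lemma LC1_T2 b p : 0 < b -> LC1 (fun b p => snd (Tmap mu psi b p)) b p.
Proof.
  intros Hb.
  change (LC1 (fun b p => exp (1/2 * ln (- f b p * / mu)) * sin (b + p)) b p).
  assert (Hf := f_neg b p Hb).
  assert (Hpos : 0 < - f b p * / mu) by (apply Rmult_lt_0_compat; [lra | apply Rinv_0_lt_compat; lra]).
  apply LC1_mult. apply LC1_exp. apply LC1_mult. apply LC1_const.
  apply LC1_ln; auto. apply LC1_mult. apply LC1_opp.
  apply (LC1_f (fun a _ => a) (fun _ b => b)); auto. apply LC1_x. apply LC1_y.
  apply LC1_const. apply LC1_sin. apply LC1_plus. apply LC1_x. apply LC1_y.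
Qed.


Lemma per_nat n b p : 0 < b -> psi b (p + 2 * PI * INR n) = psi b p.
Proof.
  intros Hb. induction n.
  - simpl. f_equal. ring.
  - rewrite S_INR. replace (p + 2 * PI * (INR n + 1)) with ((p + 2 * PI * INR n) + 2 * PI) by ring.
    rewrite Hper; auto.
Qed.

Lemma per_Z k b p : 0 < b -> psi b (p + 2 * PI * IZR k) = psi b p.
Proof.
  intros Hb. destruct (Z_le_gt_dec 0 k) as [Hk|Hk].
  - rewrite <- (Z2Nat.id k Hk). rewrite <- INR_IZR_INZ. apply per_nat; auto.
  - assert (E : IZR k = - INR (Z.to_nat (- k))).
    { rewrite INR_IZR_INZ. rewrite Z2Nat.id by lia. rewrite opp_IZR. ring. }
    rewrite E. rewrite <- (per_nat (Z.to_nat (-k)) b (p + 2 * PI * - INR (Z.to_nat (- k)))); auto.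
    f_equal. ring.
Qed.

Lemma fper_Z k b p : 0 < b -> f b (p + 2 * PI * IZR k) = f b p.
Proof.
  intros Hb. unfold dpsi. apply Derive_ext_loc.
  generalize (open_gt 0 b Hb). apply filter_imp. intros t Ht. apply per_Z; auto.
Qed.

Lemma trig_eq a c : cos a = cos c -> sin a = sin c -> exists k, a = c + 2 * PI * IZR k.
Proof.
  intros Hc Hs.
  assert (H1 : cos (a - c) = 1).
  { rewrite cos_minus, Hc, Hs. pose proof (sin2_cos2 c). unfold Rsqr in H. lra. }
  assert (H2 : sin ((a - c) / 2) = 0).
  { pose proof (cos_2a_sin ((a - c) / 2)). replace (2 * ((a - c) / 2)) with (a - c) in H by field.
    rewrite H1 in H. nra. }
  destruct (sin_eq_0_0 _ H2) as [k Hk]. exists k. lra.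
Qed.

Lemma f_circ b a c : 0 < b -> cos a = cos c -> sin a = sin c -> f b a = f b c.
Proof.
  intros Hb Hc Hs. destruct (trig_eq a c Hc Hs) as [k ->]. apply fper_Z; auto.
Qed.

Lemma hKb c b : 0 < b -> is_derive (fun t => f t (c - t)) b (D1 psi b (c - b) - D2 psi b (c - b)).
Proof.
  intros Hb.
  replace (D1 psi b (c - b) - D2 psi b (c - b)) with (D1 psi b (c - b) * 1 + D2 psi b (c - b) * (-1)) by ring.
  apply (hchain (fun t => t) (fun t => c - t)); auto.
  auto_derive; auto. auto_derive; auto.
Qed.

Lemma mono c b1 b2 : 0 < b1 -> b1 < b2 -> f b1 (c - b1) < f b2 (c - b2).
Proof.
  intros H1 H2.
  destruct (MVT_gen (fun t => f t (c - t)) b1 b2 (fun t => D1 psi t (c - t) - D2 psi t (c - t))) as [z [Hz Hd]].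
  - intros x Hx. rewrite Rmin_left in Hx by lra. apply hKb. lra.
  - intros x Hx. rewrite Rmin_left in Hx by lra. apply continuity_pt_filterlim.
    apply (ex_derive_continuous (fun t => f t (c - t))). eexists. apply hKb. lra.
  - rewrite Rmin_left in Hz by lra. rewrite Rmax_right in Hz by lra.
    assert (Hn := Hneg z (c - z) ltac:(lra)). unfold psi_bphi in Hn. unfold D1, D2 in Hd.
    nra.
Qed.


Notation bs := (bspec mu psi).

Lemma bspec_any x y b : bs x y b -> (x, y) <> (0, 0) -> forall q,
  x = sqrt (x^2+y^2) * cos q -> y = sqrt (x^2+y^2) * sin q -> f b (q - b) = - mu * (x^2+y^2).
Proof.
  intros [Hb [q0 [H1 [H2 H3]]]] Hn q E1 E2.
  assert (Hr : 0 < sqrt (x^2+y^2)) by (apply sqrt_lt_R0; apply r2pos; auto).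
  assert (Hc : cos q = cos q0) by (apply (Rmult_eq_reg_l (sqrt (x^2+y^2))); lra).
  assert (Hs : sin q = sin q0) by (apply (Rmult_eq_reg_l (sqrt (x^2+y^2))); lra).
  rewrite <- H3. apply f_circ; auto.
  rewrite !cos_minus, Hc, Hs; auto. rewrite !sin_minus, Hc, Hs; auto.
Qed.

Lemma bspec_uniq x y b1 b2 : (x, y) <> (0, 0) -> bs x y b1 -> bs x y b2 -> b1 = b2.
Proof.
  intros Hn H1 H2.
  destruct H1 as [Hb1 [q [E1 [E2 E3]]]].
  assert (E4 := bspec_any x y b2 H2 Hn q E1 E2).
  destruct H2 as [Hb2 _].
  destruct (Rtotal_order b1 b2) as [Hl|[Hl|Hl]]; auto.
  - pose proof (mono q b1 b2 Hb1 Hl). lra.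
  - pose proof (mono q b2 b1 Hb2 Hl). lra.
Qed.

Lemma Rpow_pos b e : 0 < b -> 0 < Rpower b e.
Proof. intros; unfold Rpower; apply exp_pos. Qed.

Lemma bspec_ex x y : (x, y) <> (0, 0) -> exists b, bs x y b.
Proof.
  intros Hn. destruct (ex_al x y Hn) as [al Hal].
  destruct (th_cos al x y Hal) as [E1 E2]. set (q := th al x y) in *.
  set (r2 := x^2+y^2) in *.
  assert (Hr2 : 0 < r2) by (apply r2pos; auto).
  set (X := 2 * mu * r2 / m). set (Y := mu * r2 / (2 * M)).
  assert (HX : 0 < X) by (unfold X; apply Rdiv_lt_0_compat; nra).
  assert (HY : 0 < Y) by (unfold Y; apply Rdiv_lt_0_compat; nra).
  set (blo := Rpower X (- / (2 * mu))). set (bhi := Rpower Y (- / (2 * mu))).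
  assert (Hlo : 0 < blo) by apply Rpow_pos, HX.
  assert (Hhi : 0 < bhi) by apply Rpow_pos, HY.
  assert (PX : Rpower blo (- (2 * mu)) = X).
  { unfold blo. rewrite Rpower_mult. replace (- / (2 * mu) * - (2 * mu)) with 1 by (field; lra).
    apply Rpower_1; auto. }
  assert (PY : Rpower bhi (- (2 * mu)) = Y).
  { unfold bhi. rewrite Rpower_mult. replace (- / (2 * mu) * - (2 * mu)) with 1 by (field; lra).
    apply Rpower_1; auto. }
  set (g := fun t => f t (q - t) + mu * r2).
  assert (Glo : g blo < 0).
  { unfold g. destruct (Hbd blo (q - blo) Hlo) as [_ H]. rewrite PX in H. unfold X in H.
    assert (m * (2 * mu * r2 / m) = 2 * mu * r2) by (field; lra). nra. }
  assert (Ghi : 0 < g bhi).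
  { unfold g. destruct (Hbd bhi (q - bhi) Hhi) as [H _]. rewrite PY in H. unfold Y in H.
    assert (M * (mu * r2 / (2 * M)) = mu * r2 / 2) by (field; lra). nra. }
  assert (Hlh : blo < bhi).
  { destruct (Rtotal_order blo bhi) as [Hl|[Hl|Hl]]; auto.
    - rewrite Hl in Glo. lra.
    - pose proof (mono q bhi blo Hhi Hl). unfold g in *. lra. }
  destruct (Ranalysis5.IVT_interv g blo bhi) as [z [Hz Gz]]; auto.
  { intros a Ha. apply continuity_pt_filterlim. unfold g.
    apply (ex_derive_continuous (fun t => f t (q - t) + mu * r2)).
    apply (ex_derive_plus (fun t => f t (q - t)) (fun _ => mu * r2)).
    eexists. apply hKb. lra. apply ex_derive_const. }
  exists z. split. lra. exists q. split; auto. split; auto. unfold g in Gz. fold r2. lra.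
Qed.

Lemma bi_spec x y : (x, y) <> (0, 0) -> bs x y (bi mu psi x y).
Proof. intros Hn. unfold bi. apply epsilon_spec. apply bspec_ex; auto. Qed.


Lemma cont_implicit (w rho be : R -> R -> R) x0 y0 :
 locally (x0,y0) (fun q => 0 < be (fst q) (snd q) /\
   f (be (fst q) (snd q)) (w (fst q) (snd q) - be (fst q) (snd q)) + mu * rho (fst q) (snd q) = 0) ->
 continuous (fun q => w (fst q) (snd q)) (x0,y0) -> continuous (fun q => rho (fst q) (snd q)) (x0,y0) ->
 continuous (fun q => be (fst q) (snd q)) (x0,y0).
Proof.
  intros HN Hw Hr.
  destruct (locally_singleton _ _ HN) as [Hb0 HE0]. simpl in Hb0, HE0.
  apply filterlim_locally. intros eps.
  set (b0 := be x0 y0) in *. set (w0 := w x0 y0) in *.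
  set (e := Rmin (eps/2) (b0/2)).
  assert (He : 0 < e) by (apply Rmin_pos; pose proof (cond_pos eps); lra).
  assert (He1 : e <= eps/2) by apply Rmin_l.
  assert (He2 : e <= b0/2) by apply Rmin_r.
  assert (Ep : 0 < f (b0+e) (w0 - (b0+e)) + mu * rho x0 y0).
  { pose proof (mono w0 b0 (b0+e) Hb0 ltac:(lra)). lra. }
  assert (Em : 0 < - (f (b0-e) (w0 - (b0-e)) + mu * rho x0 y0)).
  { pose proof (mono w0 (b0-e) b0 ltac:(lra) ltac:(lra)). lra. }
  assert (cP : continuous (fun q : R * R => f (b0+e) (w (fst q) (snd q) - (b0+e)) + mu * rho (fst q) (snd q)) (x0,y0)).
  { apply c_plus. apply (cf_comp (fun _ => b0+e) (fun q : R * R => w (fst q) (snd q) - (b0+e))).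
    apply c_const. apply c_minus; auto. apply c_const. simpl; lra.
    apply c_mult; auto. apply c_const. }
  assert (cM : continuous (fun q : R * R => - (f (b0-e) (w (fst q) (snd q) - (b0-e)) + mu * rho (fst q) (snd q))) (x0,y0)).
  { apply c_opp. apply c_plus. apply (cf_comp (fun _ => b0-e) (fun q : R * R => w (fst q) (snd q) - (b0-e))).
    apply c_const. apply c_minus; auto. apply c_const. simpl; lra.
    apply c_mult; auto. apply c_const. }
  generalize (filter_and _ _ (filter_and _ _ HN (loc_pos _ _ cP Ep)) (loc_pos _ _ cM Em)).
  apply filter_imp. intros q [[[Hbq HEq] P1] P2]. cbv beta in P1, P2.
  apply ball_R.
  set (bq := be (fst q) (snd q)) in *. set (wq := w (fst q) (snd q)) in *.
  set (rq := rho (fst q) (snd q)) in *.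
  assert (P1' : 0 < f (b0+e) (wq - (b0+e)) + mu * rq) by exact P1.
  assert (P2' : 0 < - (f (b0-e) (wq - (b0-e)) + mu * rq)) by exact P2.
  assert (HEq' : f bq (wq - bq) + mu * rq = 0) by exact HEq.
  clear P1 P2 HEq.
  assert (U1 : bq < b0 + e).
  { destruct (Rtotal_order bq (b0+e)) as [H|[H|H]]; auto.
    - rewrite H in HEq'. lra.
    - pose proof (mono wq (b0+e) bq ltac:(lra) H). lra. }
  assert (U2 : b0 - e < bq).
  { destruct (Rtotal_order bq (b0-e)) as [H|[H|H]]; auto.
    - pose proof (mono wq bq (b0-e) Hbq H). lra.
    - rewrite H in HEq'. lra. }
  simpl. fold b0. pose proof (cond_pos eps). unfold Rabs; destruct Rcase_abs; lra.
Qed.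


Lemma is_derive_eq (F : R -> R) x a b : is_derive F x a -> a = b -> is_derive F x b.
Proof. intros H ->; auto. Qed.

Lemma partial_impl (W P B : R -> R) s1 :
  (exists d, 0 < d /\ forall s, Rabs (s - s1) < d -> 0 < B s /\
       f (B s) (W s - B s) + mu * P s = 0 /\ ex_derive W s /\ ex_derive P s) ->
  continuous B s1 -> continuous (Derive W) s1 -> continuous (Derive P) s1 ->
  is_derive B s1 (- (D2 psi (B s1) (W s1 - B s1) * Derive W s1 + mu * Derive P s1) /
                   (D1 psi (B s1) (W s1 - B s1) - D2 psi (B s1) (W s1 - B s1))).
Proof.
  intros [d [Hd HN]] HB HdW HdP.
  destruct (HN s1 ltac:(rewrite Rminus_diag, Rabs_R0; lra)) as [Hb1 [HE1 [HW1 HP1]]].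
  assert (cW : continuous W s1) by (apply (ex_derive_continuous W); auto).
  apply (deriv1d (fun b s => f b (W s - b) + mu * P s)
                 (fun b s => D1 psi b (W s - b) - D2 psi b (W s - b))
                 (fun b s => D2 psi b (W s - b) * Derive W s + mu * Derive P s) B s1 (Rmin d (B s1))).
  - apply Rmin_pos; lra.
  - intros s Hs. apply HN. pose proof (Rmin_l d (B s1)). lra.
  - exact HB.
  - intros b s Hb Hs. pose proof (Rmin_r d (B s1)).
    assert (0 < b) by (unfold Rabs in Hb; destruct Rcase_abs in Hb; lra).
    eapply is_derive_eq.
    apply (is_derive_plus (fun b => f b (W s - b)) (fun _ => mu * P s)).
    apply hKb; auto. apply is_derive_const. unfold plus, zero; simpl. ring.
  - intros s Hs. pose proof (Rmin_l d (B s1)).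
    destruct (HN s ltac:(lra)) as [_ [_ [HWs HPs]]].
    eapply is_derive_eq.
    apply (is_derive_plus (fun s => f (B s1) (W s - B s1)) (fun s => mu * P s)).
    apply (hchain (fun _ => B s1) (fun s => W s - B s1) s 0 (Derive W s)); auto.
    auto_derive; auto. auto_derive; auto. rewrite Rmult_1_l; reflexivity.
    auto_derive; auto.
    unfold plus; simpl. rewrite Rmult_1_l. change (Derive (fun x => P x) s) with (Derive P s). ring.
  - apply c_minus.
    + apply (cD1_comp (fun z : R * R => fst z) (fun z : R * R => W (snd z) - fst z)).
      apply c_fst. apply c_minus. apply (c_comp1 W (fun z : R * R => snd z)). apply c_snd. exact cW.
      apply c_fst. simpl; lra.
    + apply (cD2_comp (fun z : R * R => fst z) (fun z : R * R => W (snd z) - fst z)).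
      apply c_fst. apply c_minus. apply (c_comp1 W (fun z : R * R => snd z)). apply c_snd. exact cW.
      apply c_fst. simpl; lra.
  - apply c_plus. apply c_mult; auto.
    apply (cD2_comp (fun _ => B s1) (fun s => W s - B s1)). apply c_const.
    apply c_minus. exact cW. apply c_const. auto.
    apply c_mult. apply c_const. auto.
  - pose proof (Hneg (B s1) (W s1 - B s1) Hb1). unfold psi_bphi in H. unfold D1, D2. lra.
Qed.


Lemma cFx (be w dw dr : R * R -> R) q0 :
  continuous be q0 -> continuous w q0 -> continuous dw q0 -> continuous dr q0 -> 0 < be q0 ->
  continuous (fun q => - (D2 psi (be q) (w q - be q) * dw q + mu * dr q) /
                        (D1 psi (be q) (w q - be q) - D2 psi (be q) (w q - be q))) q0.
Proof.
  intros Hb Hw Hdw Hdr Hp.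
  assert (c1 : continuous (fun q => D1 psi (be q) (w q - be q)) q0) by (apply cD1_comp; auto; apply c_minus; auto).
  assert (c2 : continuous (fun q => D2 psi (be q) (w q - be q)) q0) by (apply cD2_comp; auto; apply c_minus; auto).
  apply c_mult. apply c_opp. apply c_plus. apply c_mult; auto. apply c_mult; auto. apply c_const.
  apply c_inv. apply c_minus; auto.
  pose proof (Hneg (be q0) (w q0 - be q0) Hp). unfold psi_bphi in H. unfold D1, D2. lra.
Qed.

Lemma LC1_implicit (w rho be : R -> R -> R) x0 y0 :
 locally (x0,y0) (fun q => LC1 w (fst q) (snd q) /\ LC1 rho (fst q) (snd q) /\ 0 < be (fst q) (snd q) /\
   f (be (fst q) (snd q)) (w (fst q) (snd q) - be (fst q) (snd q)) + mu * rho (fst q) (snd q) = 0) ->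
 LC1 be x0 y0.
Proof.
  intros HN.
  set (N := fun q : R * R => LC1 w (fst q) (snd q) /\ LC1 rho (fst q) (snd q) /\ 0 < be (fst q) (snd q) /\
   f (be (fst q) (snd q)) (w (fst q) (snd q) - be (fst q) (snd q)) + mu * rho (fst q) (snd q) = 0) in *.
  assert (cA : forall x1 y1, locally (x1, y1) N -> continuous (fun q => be (fst q) (snd q)) (x1, y1)).
  { intros x1 y1 H. destruct (locally_singleton _ _ H) as [Lw [Lr _]]. simpl in Lw, Lr.
    apply cont_implicit with w rho.
    - generalize H. apply filter_imp. intros q [_ [_ [A B]]]. auto.
    - apply Lw. - apply Lr. }
  set (Fx := fun x y => - (D2 psi (be x y) (w x y - be x y) * Derive (fun t => w t y) x + mu * Derive (fun t => rho t y) x) /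
                (D1 psi (be x y) (w x y - be x y) - D2 psi (be x y) (w x y - be x y))).
  set (Fy := fun x y => - (D2 psi (be x y) (w x y - be x y) * Derive (fun t => w x t) y + mu * Derive (fun t => rho x t) y) /
                (D1 psi (be x y) (w x y - be x y) - D2 psi (be x y) (w x y - be x y))).
  assert (Bx : forall x1 y1, locally (x1, y1) N -> is_derive (fun t => be t y1) x1 (Fx x1 y1)).
  { intros x1 y1 H. destruct (locally_singleton _ _ H) as [Lw [Lr _]]. simpl in Lw, Lr.
    apply (partial_impl (fun s => w s y1) (fun s => rho s y1) (fun s => be s y1) x1).
    - destruct (loc_sec_x _ _ _ H) as [d [Hd Hs]]. exists d. split; auto.
      intros s Hs'. destruct (Hs s Hs') as [L1 [L2 [L3 L4]]]. simpl in *.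
      split; auto. split; auto. split. apply (LC1_C1 _ _ _ L1). apply (LC1_C1 _ _ _ L2).
    - apply (cont_sec_x be). apply cA; auto.
    - apply (cont_sec_x (fun a b => Derive (fun t => w t b) a)). apply Lw.
    - apply (cont_sec_x (fun a b => Derive (fun t => rho t b) a)). apply Lr. }
  assert (By : forall x1 y1, locally (x1, y1) N -> is_derive (fun t => be x1 t) y1 (Fy x1 y1)).
  { intros x1 y1 H. destruct (locally_singleton _ _ H) as [Lw [Lr _]]. simpl in Lw, Lr.
    apply (partial_impl (fun s => w x1 s) (fun s => rho x1 s) (fun s => be x1 s) y1).
    - destruct (loc_sec_y _ _ _ H) as [d [Hd Hs]]. exists d. split; auto.
      intros s Hs'. destruct (Hs s Hs') as [L1 [L2 [L3 L4]]]. simpl in *.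
      split; auto. split; auto. split. apply (LC1_C1 _ _ _ L1). apply (LC1_C1 _ _ _ L2).
    - apply (cont_sec_y be). apply cA; auto.
    - apply (cont_sec_y (fun a b => Derive (fun t => w a t) b)). apply Lw.
    - apply (cont_sec_y (fun a b => Derive (fun t => rho a t) b)). apply Lr. }
  pose proof (locally_locally _ _ HN) as HLL.
  destruct (locally_singleton _ _ HN) as [Lw [Lr [Lb _]]]. simpl in Lw, Lr, Lb.
  split; [|split;[|split]].
  - generalize HLL. apply filter_imp. intros [x1 y1] H. simpl.
    split; eexists. apply Bx; auto. apply By; auto.
  - apply cA; auto.
  - apply continuous_ext_loc with (fun q => Fx (fst q) (snd q)).
    + generalize HLL. apply filter_imp. intros [x1 y1] H. simpl. symmetry. apply is_derive_unique. apply Bx; auto.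
    + unfold Fx. apply (cFx (fun q => be (fst q) (snd q)) (fun q => w (fst q) (snd q))
        (fun q => Derive (fun t => w t (snd q)) (fst q)) (fun q => Derive (fun t => rho t (snd q)) (fst q))).
      apply cA; auto. apply Lw. apply Lw. apply Lr. auto.
  - apply continuous_ext_loc with (fun q => Fy (fst q) (snd q)).
    + generalize HLL. apply filter_imp. intros [x1 y1] H. simpl. symmetry. apply is_derive_unique. apply By; auto.
    + unfold Fy. apply (cFx (fun q => be (fst q) (snd q)) (fun q => w (fst q) (snd q))
        (fun q => Derive (fun t => w (fst q) t) (snd q)) (fun q => Derive (fun t => rho (fst q) t) (snd q))).
      apply cA; auto. apply Lw. apply Lw. apply Lr. auto.
Qed.


Lemma LC1_bi x0 y0 : (x0, y0) <> (0, 0) -> LC1 (bi mu psi) x0 y0.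
Proof.
  intros Hn. destruct (ex_al x0 y0 Hn) as [al Hal].
  apply (LC1_implicit (th al) (fun x y => x^2 + y^2)).
  assert (cu : continuous (fun q : R * R => fst q * cos al + snd q * sin al) (x0, y0)).
  { apply c_plus; apply c_mult; try apply c_const. apply c_fst. apply c_snd. }
  generalize (loc_pos _ _ cu Hal). apply filter_imp. intros [x y] Hu. simpl in Hu |- *.
  assert (Hxy : (x, y) <> (0, 0)) by (intros E; injection E; intros; subst; lra).
  destruct (bi_spec x y Hxy) as [Hb HS].
  destruct (th_cos al x y Hu) as [E1 E2].
  split. apply LC1_th; auto. split. apply LC1_r2. split; auto.
  rewrite (bspec_any x y (bi mu psi x y) (bi_spec x y Hxy) Hxy (th al x y) E1 E2). ring.
Qed.

Lemma LC1_ci x0 y0 : (x0, y0) <> (0, 0) -> LC1 (ci mu psi) x0 y0.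
Proof.
  intros Hn. pose proof (r2pos x0 y0 Hn) as Hr.
  change (LC1 (fun x y => (x * cos (bi mu psi x y) + y * sin (bi mu psi x y)) * / sqrt (x^2 + y^2)) x0 y0).
  apply (LC1_mult (fun x y => x * cos (bi mu psi x y) + y * sin (bi mu psi x y)) (fun x y => / sqrt (x^2 + y^2))).
  - apply (LC1_plus (fun x y => x * cos (bi mu psi x y)) (fun x y => y * sin (bi mu psi x y))).
    + apply (LC1_mult (fun x y => x) (fun x y => cos (bi mu psi x y))). apply LC1_x.
      apply (LC1_cos (bi mu psi)). apply LC1_bi; auto.
    + apply (LC1_mult (fun x y => y) (fun x y => sin (bi mu psi x y))). apply LC1_y.
      apply (LC1_sin (bi mu psi)). apply LC1_bi; auto.
  - apply (LC1_inv (fun x y => sqrt (x^2 + y^2))).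
    apply (LC1_sqrt (fun x y => x^2 + y^2)). apply LC1_r2. auto.
    apply Rgt_not_eq. apply sqrt_lt_R0; auto.
Qed.

Lemma LC1_si x0 y0 : (x0, y0) <> (0, 0) -> LC1 (si mu psi) x0 y0.
Proof.
  intros Hn. pose proof (r2pos x0 y0 Hn) as Hr.
  change (LC1 (fun x y => (y * cos (bi mu psi x y) + - (x * sin (bi mu psi x y))) * / sqrt (x^2 + y^2)) x0 y0).
  apply (LC1_mult (fun x y => y * cos (bi mu psi x y) + - (x * sin (bi mu psi x y))) (fun x y => / sqrt (x^2 + y^2))).
  - apply (LC1_plus (fun x y => y * cos (bi mu psi x y)) (fun x y => - (x * sin (bi mu psi x y)))).
    + apply (LC1_mult (fun x y => y) (fun x y => cos (bi mu psi x y))). apply LC1_y.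
      apply (LC1_cos (bi mu psi)). apply LC1_bi; auto.
    + apply (LC1_opp (fun x y => x * sin (bi mu psi x y))).
      apply (LC1_mult (fun x y => x) (fun x y => sin (bi mu psi x y))). apply LC1_x.
      apply (LC1_sin (bi mu psi)). apply LC1_bi; auto.
  - apply (LC1_inv (fun x y => sqrt (x^2 + y^2))).
    apply (LC1_sqrt (fun x y => x^2 + y^2)). apply LC1_r2. auto.
    apply Rgt_not_eq. apply sqrt_lt_R0; auto.
Qed.


Lemma T_eq b p : Tmap mu psi b p = (exp (1/2 * ln (- f b p / mu)) * cos (b + p), exp (1/2 * ln (- f b p / mu)) * sin (b + p)).
Proof. reflexivity. Qed.

Lemma inv_right x y : (x, y) <> (0, 0) ->
  0 < bi mu psi x y /\ ci mu psi x y ^ 2 + si mu psi x y ^ 2 = 1 /\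
  forall p, cos p = ci mu psi x y -> sin p = si mu psi x y -> Tmap mu psi (bi mu psi x y) p = (x, y).
Proof.
  intros Hn. pose proof (r2pos x y Hn) as Hr2.
  pose proof (bi_spec x y Hn) as Hs. destruct Hs as [Hb [q [E1 [E2 E3]]]].
  set (b := bi mu psi x y) in *. set (r := sqrt (x^2+y^2)) in *.
  assert (Hr : 0 < r) by (apply sqrt_lt_R0; auto).
  assert (Hrr : r * r = x^2 + y^2) by (apply sqrt_sqrt; lra).
  assert (Hci : ci mu psi x y = cos (q - b)).
  { unfold ci. fold b r. rewrite cos_minus. rewrite E1, E2 at 1. field. lra. }
  assert (Hsi : si mu psi x y = sin (q - b)).
  { unfold si. fold b r. rewrite sin_minus. rewrite E1, E2 at 1. field. lra. }
  split; auto. split.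
  - rewrite Hci, Hsi. pose proof (sin2_cos2 (q - b)). unfold Rsqr in H. simpl. lra.
  - intros p Hc Hs. rewrite Hci in Hc. rewrite Hsi in Hs.
    rewrite T_eq. rewrite (f_circ b p (q - b) Hb Hc Hs), E3.
    replace (- (- mu * (x ^ 2 + y ^ 2)) / mu) with (x^2 + y^2) by (field; lra).
    rewrite exp_half by auto. fold r.
    assert (Cb : cos (b + p) = cos q).
    { rewrite cos_plus, Hc, Hs, <- cos_plus. f_equal. ring. }
    assert (Sb : sin (b + p) = sin q).
    { rewrite sin_plus, Hc, Hs. rewrite <- sin_plus. f_equal. ring. }
    rewrite Cb, Sb. rewrite <- E1, <- E2. reflexivity.
Qed.

Lemma inv_left b p : 0 < b ->
  bi mu psi (fst (Tmap mu psi b p)) (snd (Tmap mu psi b p)) = b /\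
  ci mu psi (fst (Tmap mu psi b p)) (snd (Tmap mu psi b p)) = cos p /\
  si mu psi (fst (Tmap mu psi b p)) (snd (Tmap mu psi b p)) = sin p.
Proof.
  intros Hb. rewrite T_eq. simpl.
  set (z := - f b p / mu).
  assert (Hz : 0 < z) by (unfold z; pose proof (f_neg b p Hb); apply Rdiv_lt_0_compat; lra).
  set (R0 := exp (1 / 2 * ln z)).
  assert (HR : 0 < R0) by apply exp_pos.
  assert (HRR : R0 * R0 = z) by (unfold R0; rewrite exp_half by auto; apply sqrt_sqrt; lra).
  set (X := R0 * cos (b + p)). set (Y := R0 * sin (b + p)).
  assert (HXY : X^2 + Y^2 = R0 * R0) by (unfold X, Y; pose proof (sin2_cos2 (b + p)); unfold Rsqr in H; nra).
  assert (Hsq : sqrt (X^2 + Y^2) = R0) by (rewrite HXY; apply sqrt_square; lra).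
  assert (Hn : (X, Y) <> (0, 0)).
  { intros E. injection E. intros E2 E1. pose proof (sin2_cos2 (b + p)). unfold Rsqr in H.
    unfold X, Y in *. assert (cos (b+p) = 0) by (apply (Rmult_eq_reg_l R0); lra).
    assert (sin (b+p) = 0) by (apply (Rmult_eq_reg_l R0); lra). nra. }
  assert (Hspec : bspec mu psi X Y b).
  { split; auto. exists (b + p). rewrite Hsq. split; [reflexivity|]. split; [reflexivity|].
    replace (b + p - b) with p by ring. rewrite HXY, HRR. unfold z. field. lra. }
  assert (Hbi : bi mu psi X Y = b) by (apply (bspec_uniq X Y); auto; apply bi_spec; auto).
  split; auto. unfold ci, si. rewrite Hbi, Hsq. unfold X, Y. split.
  - replace p with ((b + p) - b) at 3 by ring. rewrite cos_minus. field. lra.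
  - replace p with ((b + p) - b) at 3 by ring. rewrite sin_minus. field. lra.
Qed.

End S.

Theorem proposition4p1 (mu : R) (psi : R -> R -> R) (m M : R) :
  0 < mu ->
  (forall b p, 0 < b -> psi b (p + 2 * PI) = psi b p) ->
  (forall b p, 0 < b -> ex_derive (fun t => psi t p) b) ->
  C1_on (fun b _ => 0 < b) (dpsi psi) ->
  0 < m -> m <= M ->
  (forall b p, 0 < b ->
     - M * Rpower b (- (2 * mu)) <= dpsi psi b p <= - m * Rpower b (- (2 * mu))) ->
  (forall b p, 0 < b -> psi_bphi psi b p < 0) ->
  C1_on (fun b _ => 0 < b) (fun b p => fst (Tmap mu psi b p)) /\
  C1_on (fun b _ => 0 < b) (fun b p => snd (Tmap mu psi b p)) /\
  (forall b p, 0 < b -> Tmap mu psi b p <> (0, 0)) /\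
  exists bi ci si : R -> R -> R,
    C1_on (fun x y => (x, y) <> (0, 0)) bi /\
    C1_on (fun x y => (x, y) <> (0, 0)) ci /\
    C1_on (fun x y => (x, y) <> (0, 0)) si /\
    (forall x y, (x, y) <> (0, 0) ->
       0 < bi x y /\ ci x y ^ 2 + si x y ^ 2 = 1 /\
       forall p, cos p = ci x y -> sin p = si x y ->
         Tmap mu psi (bi x y) p = (x, y)) /\
    (forall b p, 0 < b ->
       bi (fst (Tmap mu psi b p)) (snd (Tmap mu psi b p)) = b /\
       ci (fst (Tmap mu psi b p)) (snd (Tmap mu psi b p)) = cos p /\
       si (fst (Tmap mu psi b p)) (snd (Tmap mu psi b p)) = sin p).
Proof.
  intros Hmu Hper Hex HC1 Hm HmM Hbd Hneg.
  split. { intros b p Hb. apply (LC1_C1 (fun b p => fst (Tmap mu psi b p))). apply (LC1_T1 mu psi m M); auto. }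
  split. { intros b p Hb. apply (LC1_C1 (fun b p => snd (Tmap mu psi b p))). apply (LC1_T2 mu psi m M); auto. }
  split.
  { intros b p Hb E. rewrite T_eq in E. injection E. intros E2 E1.
    pose proof (f_neg mu psi m M Hm Hbd b p Hb) as Hf.
    set (R0 := exp (1 / 2 * ln (- dpsi psi b p / mu))) in *.
    assert (HR : 0 < R0) by apply exp_pos.
    pose proof (sin2_cos2 (b + p)) as H. unfold Rsqr in H.
    assert (cos (b+p) = 0) by (apply (Rmult_eq_reg_l R0); lra).
    assert (sin (b+p) = 0) by (apply (Rmult_eq_reg_l R0); lra). nra. }
  exists (bi mu psi), (ci mu psi), (si mu psi).
  split. { intros x y H. apply (LC1_C1 (bi mu psi)). apply (LC1_bi mu psi m M Hmu Hper HC1 Hm HmM Hbd Hneg); auto. }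
  split. { intros x y H. apply (LC1_C1 (ci mu psi)). apply (LC1_ci mu psi m M Hmu Hper HC1 Hm HmM Hbd Hneg); auto. }
  split. { intros x y H. apply (LC1_C1 (si mu psi)). apply (LC1_si mu psi m M Hmu Hper HC1 Hm HmM Hbd Hneg); auto. }
  split. { intros x y H. apply (inv_right mu psi m M Hmu Hper HC1 Hm HmM Hbd Hneg); auto. }
  intros b p Hb. apply (inv_left mu psi m M Hmu Hper HC1 Hm HmM Hbd Hneg); auto.
Qed.
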